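(* Fix $n\ge 1$. The set $\{\beta^k\,\mathcal{G}^{(\beta)}_a : k\in\mathbb{Z}_{\ge 0},\ a \text{ a weak composition of length } n\}$ is a basis of the free $\mathbb{Z}$-module $\mathbb{Z}[x_1,\dots,x_n][\beta]$. Consequently, $\{\mathcal{G}^{(-1)}_a : a \text{ a weak composition of length } n\}$ is a $\mathbb{Z}$-basis of $\mathbb{Z}[x_1,\dots,x_n]$.
   Context: A weak composition of length $n$ is a sequence $a=(a_1,\dots,a_n)$ of nonnegative integers; $|a|=\sum a_i$, and $\mathtt{flat}(a)$ is the sequence of nonzero entries of $a$ in order. A weak komposition is a weak composition in which each positive entry is colored either black or red (zero entries are uncolored); its excess $\mathrm{ex}(b)$ is the number of red entries. Let $a$ be a weak composition of length $n$ whose nonzero entries are exactly in positions $n_1<\dots<n_\ell$. A weak komposition $b$ of length $n$ is a glide of $a$ if there exist integers $0=i_0<i_1<\dots<i_\ell$ with $i_j\le n_j$ for all $j$, such that $b_k=0$ for all $k>i_\ell$, and for each $j=1,\dots,\ell$: (i) $b_{i_{j-1}+1}+\dots+b_{i_j}=\mathtt{flat}(a)_j+(\text{number of red entries among } b_{i_{j-1}+1},\dots,b_{i_j})$; (ii) the first nonzero entry among $b_{i_{j-1}+1},\dots,b_{i_j}$ is black. (Kompositions differing only in coloring are distinct glides.) With $\beta$ a formal parameter, the glide polynomial is $\mathcal{G}^{(\beta)}_a=\mathcal{G}^{(\beta)}_a(x_1,\dots,x_n)=\sum_{b}\beta^{\mathrm{ex}(b)}x_1^{b_1}\cdots x_n^{b_n}$,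 summed over all glides $b$ of $a$. *)

(* Defs.v *)
From mathcomp Require Import all_boot all_order all_algebra.
Set Implicit Arguments. Unset Strict Implicit. Unset Printing Implicit Defensive.
Import GRing.Theory Num.Theory.

(* Weak compositions of length n are n.-tuple nat (entry i, 0-indexed, is a_(i+1)).
   A weak komposition is a pair (b, r) : n.-tuple nat * n.-tuple bool, where
   r i = true means entry i is red; r may only be true at positive entries
   (zero entries are uncolored, encoded as r i = false). *)

Definition flat (s : seq nat) : seq nat := [seq x <- s | x != 0%N].

(* 1-indexed positions n_1 < ... < n_l of the nonzero entries of a *)
Definition nzpos (n : nat) (a : seq nat) : seq nat :=
  [seq i.+1 | i <- iota 0 n & nth 0%N a i != 0%N].

Definition iskomp (n : nat) (b : n.-tuple nat) (r : n.-tuple bool) : bool :=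
  all (fun i => nth false r i ==> (0 < nth 0%N b i)) (iota 0 n).

(* Conditions (i) and (ii) for the block of 1-indexed positions lo+1, ..., hi
   (0-indexed positions lo, ..., hi-1) with target value m = flat(a)_j. *)
Definition block_ok (n : nat) (b : n.-tuple nat) (r : n.-tuple bool)
    (lo hi m : nat) : bool :=
  let ks := iota lo (hi - lo) in
  (sumn [seq nth 0%N b k | k <- ks] == m + count (fun k => nth false r k) ks)
  && all (fun k => ((nth 0%N b k != 0%N)
                    && all (fun k' => nth 0%N b k' == 0%N) (iota lo (k - lo)))
                   ==> ~~ nth false r k) ks.

(* b (colored by r) is a glide of a: there exist 0 = i_0 < i_1 < ... < i_l
   (here the tuple s lists i_1, ..., i_l, each in {0..n}) with i_j <= n_j,
   b_k = 0 for k > i_l, and each block satisfying (i), (ii). *)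
Definition glide (n : nat) (a b : n.-tuple nat) (r : n.-tuple bool) : bool :=
  let l := size (flat a) in
  [exists s : l.-tuple 'I_n.+1,
    let S := 0%N :: [seq val i | i <- s] in
    [&& sorted ltn S,
        all (fun j => nth 0%N S j.+1 <= nth 0%N (nzpos n a) j) (iota 0 l),
        all (fun k => nth 0%N b k == 0%N) (iota (last 0%N S) (n - last 0%N S)) &
        all (fun j => block_ok b r (nth 0%N S j) (nth 0%N S j.+1) (nth 0%N (flat a) j))
            (iota 0 l)]].

(* Coefficient of x^e beta^k in the glide polynomial G^(beta)_a:
   the number of glides of a with underlying entries e and excess k. *)
Definition Gcoef (n : nat) (a e : n.-tuple nat) (k : nat) : nat :=
  #|[pred r : n.-tuple bool | [&& iskomp e r, glide a e r & count id r == k]]|.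

(* Coefficient of x^e in G^(-1)_a = sum over glides with values e of (-1)^ex. *)
Definition Gm1coef (n : nat) (a e : n.-tuple nat) : int :=
  (\sum_(r : n.-tuple bool | iskomp e r && glide a e r) ((-1) ^+ count id r)%R)%R.

(* Z[x_1..x_n][beta] is represented by finitely supported coefficient functions
   f e d = coefficient of x^e beta^d; Z[x_1..x_n] by g e = coefficient of x^e. *)
Definition finsupp2 (n : nat) (f : n.-tuple nat -> nat -> int) : Prop :=
  exists N : nat, forall e d, f e d != 0%R -> (d < N) && all (fun x => x < N) e.

Definition finsupp1 (n : nat) (g : n.-tuple nat -> int) : Prop :=
  exists N : nat, forall e, g e != 0%R -> all (fun x => x < N) e.

(* Coefficient of x^e beta^d in beta^k * G^(beta)_a, for p = (k, a). *)
Definition bG (n : nat) (p : nat * n.-tuple nat) (e : n.-tuple nat) (d : nat) : int :=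
  if p.1 <= d then Posz (Gcoef p.2 e (d - p.1)) else 0%R.

(* Main.v *)
Require Import Defs.
From mathcomp Require Import all_boot all_order all_algebra.
From mathcomp Require Import zify.
Import GRing.Theory Num.Theory.
Set Implicit Arguments. Unset Strict Implicit. Unset Printing Implicit Defensive.

Lemma sumn_big (s : seq nat) : sumn s = \sum_(0 <= k < size s) nth 0 s k.
Proof. by rewrite sumnE (big_nth 0). Qed.

Lemma count_big (s : seq bool) :
  count id s = \sum_(0 <= k < size s) nth false s k.
Proof. by rewrite -sumn_count sumnE big_map (big_nth false). Qed.

Lemma count_big_gen T (p : pred T) x0 (s : seq T) :
  count p s = \sum_(0 <= k < size s) p (nth x0 s k).
Proof. by rewrite -sumn_count sumnE big_map (big_nth x0). Qed.

Lemma sumn_iota (f : nat -> nat) lo hi :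
  sumn [seq f k | k <- iota lo (hi - lo)] = \sum_(lo <= k < hi) f k.
Proof. by rewrite sumnE big_map. Qed.

Lemma count_iota (p : pred nat) lo hi :
  count p (iota lo (hi - lo)) = \sum_(lo <= k < hi) p k.
Proof. by rewrite -sumn_count sumnE big_map. Qed.

Lemma sumn_flat s : sumn (flat s) = sumn s.
Proof. elim: s => //= x s IH; rewrite /flat /=; case: eqP => [->|_] //=; by rewrite -IH. Qed.

Lemma le_last x0 (s : seq nat) : path leq x0 s -> forall y, y \in x0 :: s -> y <= last x0 s.
Proof.
elim: s x0 => [|z s IH] x0 /=; first by move=> _ y; rewrite inE => /eqP ->.
case/andP=> h1 h2 y; rewrite inE => /orP [/eqP ->|hy].
  by apply: leq_trans h1 _; apply: IH => //; rewrite inE eqxx.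
by apply: IH.
Qed.

Lemma tele (h : nat -> nat) x0 (t : seq nat) : path leq x0 t ->
  \sum_(j < size t) \sum_(nth 0 (x0 :: t) j <= k < nth 0 (x0 :: t) j.+1) h k
  = \sum_(x0 <= k < last x0 t) h k.
Proof.
elim: t x0 => [|y t IH] x0 /=; first by rewrite big_ord0 big_geq.
case/andP=> h1 h2; rewrite big_ord_recl /=.
have := IH y h2; rewrite /= => ->.
rewrite -big_cat_nat //; apply: (le_last h2); by rewrite inE eqxx.
Qed.

Lemma leq_sumn_mem x (s : seq nat) : x \in s -> x <= sumn s.
Proof. elim: s => //= y s IH; rewrite inE => /orP [/eqP ->|/IH]; lia. Qed.

Lemma sumn_bound N (s : seq nat) : all (fun x => x < N) s -> sumn s <= size s * N.
Proof. elim: s => //= y s IH /andP [h1 /IH]; rewrite mulSn; lia. Qed.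

Lemma sum_le_eq m (F G : nat -> nat) :
  (forall i, i < m -> F i <= G i) -> \sum_(0 <= i < m) G i <= \sum_(0 <= i < m) F i ->
  forall i, i < m -> F i = G i.
Proof.
move=> hle hs i hi; apply/eqP; rewrite eqn_leq hle //=; rewrite leqNgt; apply/negP=> hlt.
move: hs; rewrite !big_mkord (bigD1 (Ordinal hi) (F:=G)) //= (bigD1 (Ordinal hi) (F:=F)) //=.
have : \sum_(j < m | j != Ordinal hi) F j <= \sum_(j < m | j != Ordinal hi) G j.
  by apply: leq_sum => j _; apply: hle.
move=> h1; apply/negP; rewrite -ltnNge.
by rewrite -addSn; apply: leq_add.
Qed.

Definition pos (n : nat) (a : seq nat) := [seq i <- iota 0 n | nth 0 a i != 0].

Section Basic.
Variables (n : nat) (a b : n.-tuple nat) (r : n.-tuple bool).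

Lemma komp_pos : iskomp b r -> forall k, nth false r k -> 0 < nth 0 b k.
Proof.
move=> /allP H k hk; case: (ltnP k n) => hkn.
  by apply: (implyP (H k _)) => //; rewrite mem_iota.
by move: hk; rewrite nth_default // size_tuple.
Qed.

Lemma nzpos_pos : nzpos n a = map S (pos n a).
Proof. by []. Qed.

Lemma flat_pos : flat a = map (nth 0 a) (pos n a).
Proof. by rewrite /flat -{1}(mkseq_nth 0 a) size_tuple /mkseq filter_map. Qed.

Lemma size_pos : size (pos n a) = size (flat a).
Proof. by rewrite flat_pos size_map. Qed.

Lemma flat_gt0 j : j < size (flat a) -> 0 < nth 0 (flat a) j.
Proof.
move=> hj; rewrite lt0n; move: (mem_nth 0 hj); rewrite /flat mem_filter => /andP [] //.
Qed.

Lemma sum_pos (g : nat -> nat) :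
  \sum_(0 <= k < n) g k * nth 0 a k =
  \sum_(j < size (flat a)) g (nth 0 (pos n a) j) * nth 0 (flat a) j.
Proof.
rewrite -size_pos.
transitivity (\sum_(j < size (pos n a)) g (nth 0 (pos n a) j) * nth 0 a (nth 0 (pos n a) j)).
  rewrite -(big_mkord xpredT (fun j => g (nth 0 (pos n a) j) * nth 0 a (nth 0 (pos n a) j))).
  rewrite -(big_nth 0 xpredT (fun i => g i * nth 0 a i)) big_filter.
  rewrite /index_iota subn0 [RHS]big_mkcond; apply: eq_bigr => i _.
  by case: eqP => [->|]; rewrite ?muln0.
apply: eq_bigr => j _; by rewrite flat_pos (nth_map 0).
Qed.

Lemma count_nz_flat : count (fun x => x != 0) a = size (flat a).
Proof. by rewrite /flat size_filter. Qed.

Lemma sumn_tup (x : n.-tuple nat) : sumn x = \sum_(0 <= k < n) nth 0 x k.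
Proof. by rewrite sumn_big size_tuple. Qed.

Lemma count_tup (x : n.-tuple bool) : count id x = \sum_(0 <= k < n) nth false x k.
Proof. by rewrite count_big size_tuple. Qed.

Lemma countnz_tup (x : n.-tuple nat) :
  count (fun y => y != 0) x = \sum_(0 <= k < n) (nth 0 x k != 0).
Proof. by rewrite (count_big_gen _ 0) size_tuple. Qed.

End Basic.

Section Glide.
Variables (n : nat) (a b : n.-tuple nat) (r : n.-tuple bool) (t : seq nat).
Hypotheses (Ht : size t = size (flat a)) (Hp : path ltn 0 t) (Hn : last 0 t <= n)
 (Hpos : forall j, j < size (flat a) -> nth 0 (0::t) j.+1 <= nth 0 (nzpos n a) j)
 (Hz : forall k, last 0 t <= k < n -> nth 0 b k = 0)
 (Hb : forall j, j < size (flat a) ->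
    block_ok b r (nth 0 (0::t) j) (nth 0 (0::t) j.+1) (nth 0 (flat a) j))
 (Hk : iskomp b r).

Local Notation lo j := (nth 0 (0::t) j).
Local Notation hi j := (nth 0 (0::t) j.+1).

Lemma blk_sum j : j < size (flat a) ->
  \sum_(lo j <= k < hi j) nth 0 b k = nth 0 (flat a) j + \sum_(lo j <= k < hi j) nth false r k.
Proof.
move=> hj; case/andP: (Hb hj) => /eqP h1 _; move: h1.
by rewrite (sumn_iota (fun k => nth 0 b k)) count_iota.
Qed.

Lemma blk_nz j : j < size (flat a) ->
  1 + \sum_(lo j <= k < hi j) nth false r k <= \sum_(lo j <= k < hi j) (nth 0 b k != 0).
Proof.
move=> hj; case/andP: (Hb hj) => _ /allP h2.
have hs := blk_sum hj; have hf := flat_gt0 hj.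
have hex : exists k, (lo j <= k < hi j) && (nth 0 b k != 0).
  case: (boolP (has (fun k => nth 0 b k != 0) (index_iota (lo j) (hi j)))).
    case/hasP => k; rewrite mem_index_iota => hk hk'; exists k; by rewrite hk hk'.
  move/hasPn => H; exfalso; move: hs; rewrite big1_seq; first lia.
  by move=> k /= hk; apply/eqP; move: (H k hk); rewrite negbK.
case: (ex_minnP hex) => k0 /andP [/andP [hlo hhi] hnz] hmin.
have hr0 : ~~ nth false r k0.
  apply: (implyP (h2 k0 _)); first by rewrite mem_iota; lia.
  rewrite hnz /=; apply/allP => k'; rewrite mem_iota => hk'.
  apply/negPn/negP => hk2; move/andP: hk' => [h3 h4].
  have : k0 <= k' by apply: hmin; rewrite hk2 andbT; apply/andP; split; lia.
  lia.
have komp := komp_pos Hk.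
rewrite (@big_cat_nat _ _ _ k0 (lo j) (hi j) xpredT (fun k => nth false r k : nat)); [|exact: hlo|exact: ltnW].
rewrite (@big_cat_nat _ _ _ k0 (lo j) (hi j) xpredT (fun k => (nth 0 b k != 0) : nat)); [|exact: hlo|exact: ltnW].
rewrite !(big_ltn hhi) /=.
rewrite (negbTE hr0) hnz.
have e1 : \sum_(lo j <= k < k0) nth false r k <= \sum_(lo j <= k < k0) (nth 0 b k != 0).
  apply: leq_sum => k _; case: (boolP (nth false r k)) => // /komp; lia.
have e2 : \sum_(k0.+1 <= k < hi j) nth false r k <= \sum_(k0.+1 <= k < hi j) (nth 0 b k != 0).
  apply: leq_sum => k _; case: (boolP (nth false r k)) => // /komp; lia.
move: e1 e2 => /= e1 e2; rewrite add0n; change (nat_of_bool true) with 1; lia.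
Qed.

Let Hpl : path leq 0 t.
Proof. by apply: sub_path Hp => x y /ltnW. Qed.

Local Notation L := (last 0 t).

Lemma split_n (h : nat -> nat) :
  \sum_(0 <= k < n) h k = \sum_(j < size t) \sum_(lo j <= k < hi j) h k + \sum_(L <= k < n) h k.
Proof. by rewrite (tele h Hpl) -big_cat_nat. Qed.

Lemma tail_b : \sum_(L <= k < n) nth 0 b k = 0.
Proof. rewrite big_nat_cond big1 // => k /andP [hk _]; exact: Hz. Qed.

Lemma tail_r : \sum_(L <= k < n) nth false r k = 0.
Proof.
rewrite big_nat_cond big1 // => k /andP [hk _]; apply/eqP; rewrite eqb0.
apply/negP => /(komp_pos Hk); by rewrite Hz.
Qed.

Lemma G1 : \sum_(0 <= k < n) nth 0 b k = sumn (flat a) + \sum_(0 <= k < n) nth false r k.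
Proof.
rewrite !split_n tail_b tail_r !addn0.
rewrite (eq_bigr (fun j : 'I_(size t) => nth 0 (flat a) j + \sum_(lo j <= k < hi j) nth false r k)); last first.
  move=> j _; apply: blk_sum; rewrite -Ht; exact: ltn_ord.
rewrite big_split /=; congr (_ + _).
by rewrite sumn_big Ht big_mkord.
Qed.

Lemma G3 : size (flat a) + \sum_(0 <= k < n) nth false r k <= \sum_(0 <= k < n) (nth 0 b k != 0).
Proof.
rewrite !split_n tail_r addn0.
apply: (leq_trans _ (leq_addr _ _)).
have -> : size (flat a) + \sum_(j < size t) \sum_(lo j <= k < hi j) nth false r k =
   \sum_(j < size t) (1 + \sum_(lo j <= k < hi j) nth false r k).
  by rewrite big_split /= sum1_card card_ord Ht.
apply: leq_sum => j _; apply: blk_nz; rewrite -Ht; exact: ltn_ord.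
Qed.

Lemma G2 (g : nat -> nat) : {homo g : x y / x <= y >-> y <= x} ->
  \sum_(0 <= k < n) g k * nth 0 a k <= \sum_(0 <= k < n) g k * nth 0 b k.
Proof.
move=> hg; rewrite sum_pos [X in _ <= X]split_n Ht.
apply: (leq_trans _ (leq_addr _ _)).
apply: leq_sum => j _.
have hj : j < size (flat a) by exact: ltn_ord.
have hp := Hpos hj; rewrite nzpos_pos (nth_map 0) ?size_pos // in hp.
have h1 : g (nth 0 (pos n a) j) * nth 0 (flat a) j <= g (hi j).-1 * nth 0 (flat a) j.
  apply: leq_mul => //; apply: hg; lia.
apply: (leq_trans h1); apply: (@leq_trans (g (hi j).-1 * \sum_(lo j <= k < hi j) nth 0 b k)).
  rewrite (blk_sum hj); apply: leq_mul => //; exact: leq_addr.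
rewrite big_distrr /= big_nat_cond [X in _ <= X]big_nat_cond.
apply: leq_sum => k /andP [/andP [_ hk] _]; apply: leq_mul => //; apply: hg; lia.
Qed.

End Glide.

Definition PK (n K : nat) (x : seq nat) := \sum_(0 <= k < n) (k < K) * nth 0 x k.

Lemma glide_facts n (a b : n.-tuple nat) (r : n.-tuple bool) :
  iskomp b r -> glide a b r ->
  [/\ sumn b = sumn a + count id r,
      forall K, PK n K a <= PK n K b &
      size (flat a) + count id r <= count (fun x => x != 0) b].
Proof.
move=> hk /existsP [s /and4P [h1 /allP h2 /allP h3 /allP h4]].
set t := map val s.
have Ht : size t = size (flat a) by rewrite size_map size_tuple.
have Hp : path ltn 0 t by exact: h1.
have Hn : last 0 t <= n.
  have := mem_last 0 t; rewrite inE => /orP [/eqP ->//|].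
  by case/mapP => i _ ->; rewrite -ltnS ltn_ord.
have Hpos : forall j, j < size (flat a) -> nth 0 (0::t) j.+1 <= nth 0 (nzpos n a) j.
  by move=> j hj; apply: h2; rewrite mem_iota.
have Hz : forall k, last 0 t <= k < n -> nth 0 b k = 0.
  move=> k hkk; apply/eqP; apply: h3; rewrite mem_iota /= -/t; lia.
have Hb : forall j, j < size (flat a) ->
    block_ok b r (nth 0 (0::t) j) (nth 0 (0::t) j.+1) (nth 0 (flat a) j).
  by move=> j hj; apply: h4; rewrite mem_iota.
split.
- rewrite (sumn_tup b) count_tup -(sumn_flat a); exact: (G1 Ht Hp Hn Hz Hb hk).
- move=> K; rewrite /PK; apply: (G2 Ht Hp Hn Hpos Hb hk (g := fun k => (k < K) : nat)) => x y hxy.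
  case: (boolP (y < K)) => hy //=; have -> : x < K by lia. by [].
- rewrite count_tup countnz_tup; exact: (G3 Ht Hp Hn Hz Hb hk).
Qed.

Definition wt (n : nat) (x : seq nat) := \sum_(0 <= K < n.+1) PK n K x.

Lemma PK_prefix n K (x : seq nat) : K <= n -> PK n K x = \sum_(0 <= k < K) nth 0 x k.
Proof.
move=> hK; rewrite /PK (big_cat_nat (n:=K)) //=.
have -> : \sum_(K <= k < n) (k < K) * nth 0 x k = 0.
  rewrite big_nat_cond big1 // => i /andP [/andP [hi _] _]; by rewrite ltnNge hi.
rewrite addn0 big_nat_cond [RHS]big_nat_cond; apply: eq_bigr => i /andP [/andP [_ hi] _].
by rewrite hi mul1n.
Qed.

Lemma PK_eq n (x y : n.-tuple nat) : (forall K, K <= n -> PK n K x = PK n K y) -> x = y.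
Proof.
move=> H; apply: val_inj; apply: (eq_from_nth (x0 := 0)); first by rewrite !size_tuple.
move=> k; rewrite size_tuple => hk.
have h1 := H k.+1 hk; have h2 := H k (ltnW hk).
rewrite !PK_prefix ?(ltnW hk) // in h2; rewrite !PK_prefix // in h1.
rewrite !big_nat_recr // in h1. move: h1 h2 => /= h1 h2; lia.
Qed.

Lemma wt_strict n (a e : n.-tuple nat) :
  (forall K, PK n K a <= PK n K e) -> a != e -> wt n a < wt n e.
Proof.
move=> hle hne; rewrite ltnNge; apply/negP => hge; move/negP: hne; apply.
apply/eqP; apply: PK_eq => K hK.
apply: (sum_le_eq (m := n.+1) (F := fun K => PK n K a) (G := fun K => PK n K e)) => //.
Qed.

Lemma iskomp_rF n (b : n.-tuple nat) : iskomp b (nseq_tuple n false).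
Proof. by apply/allP => k _; rewrite /= nth_nseq if_same. Qed.

Lemma path_S x (p : seq nat) : path ltn x p -> path ltn x.+1 (map S p).
Proof. elim: p x => //= y p IH x /andP [h1 h2]; rewrite ltnS h1 /=; exact: IH. Qed.

Lemma glide_self n (a : n.-tuple nat) : glide a a (nseq_tuple n false).
Proof.
set z := nzpos n a; set p := pos n a; set l := size (flat a).
have hz : z = map S p by [].
have hps : sorted ltn p by apply: sorted_filter; [exact: ltn_trans|exact: iota_ltn_sorted].
have hpn : forall i, i \in p -> i < n by move=> i; rewrite mem_filter mem_iota => /andP [_ /andP [_ ]].
have hsp : size p = l by rewrite size_pos.
have hsz : size z = l by rewrite hz size_map.
have hnz : forall j, j < l -> nth 0 z j = (nth 0 p j).+1.
  by move=> j hj; rewrite hz (nth_map 0) // hsp.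
have hpz : path ltn 0 z.
  rewrite hz; case: (p) hps => //= x q hq; exact: path_S.
have hzn : forall i, i \in z -> i <= n by move=> i; rewrite hz => /mapP [k /hpn hk ->].
have hlast : last 0 z <= n.
  have := mem_last 0 z; rewrite inE => /orP [/eqP ->//|]; exact: hzn.
have hpl : path leq 0 z by apply: sub_path hpz => x y /ltnW.
have Hs : size (map (@inord n) z) == l by rewrite size_map hsz.
apply/existsP; exists (Tuple Hs).
have hval : map val (Tuple Hs) = z.
  rewrite /= -map_comp -{2}(map_id z); apply/eq_in_map => x hx /=; apply: inordK.
  by rewrite ltnS; apply: hzn.
rewrite /= hval.
have hlo : forall j, j < l -> nth 0 (0 :: z) j <= nth 0 p j.
  case=> [|j] hj //=; rewrite hnz; last lia.
  apply: (sorted_ltn_nth ltn_trans 0 hps); rewrite ?inE /= ?hsp; lia.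
have hblk : forall j, j < l -> nth 0 (flat a) j <= \sum_(nth 0 (0 :: z) j <= k < nth 0 (0 :: z) j.+1) nth 0 a k.
  move=> j hj; rewrite /= hnz // big_nat_recr ?hlo //=.
  rewrite flat_pos (nth_map 0) ?hsp //; exact: leq_addl.
have htot : \sum_(0 <= j < l) \sum_(nth 0 (0 :: z) j <= k < nth 0 (0 :: z) j.+1) nth 0 a k
   <= \sum_(0 <= j < l) nth 0 (flat a) j.
  rewrite big_mkord -hsz (tele (fun k => nth 0 a k) hpl) hsz.
  rewrite /l -sumn_big sumn_flat sumn_tup.
  rewrite (@big_cat_nat _ _ _ (last 0 z) 0 n) //=; exact: leq_addr.
have heq := sum_le_eq hblk htot.
apply/and4P; split.
- exact: hpz.
- by apply/allP => j _ /=.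
- apply/allP => k; rewrite mem_iota => /andP [hk1 hk2].
  apply/negPn/negP => hak.
  have hkp : k \in p by rewrite mem_filter hak mem_iota /=; lia.
  have : k.+1 <= last 0 z by apply: (le_last hpl); rewrite inE hz map_f ?orbT.
  lia.
- apply/allP => j; rewrite mem_iota /= => hj.
  apply/andP; split.
    rewrite (sumn_iota (fun k => nth 0 a k)) -(heq j) // .
    rewrite (@eq_count _ _ pred0); first by rewrite count_pred0 addn0.
    by move=> k /=; rewrite nth_nseq if_same.
  by apply/allP => k _; rewrite nth_nseq if_same implybT.
Qed.

Section Tri.
Local Open Scope ring_scope.
Variables (T : eqType) (B : T -> T -> int) (w : T -> nat).
Hypotheses (HB1 : forall p, B p p = 1)
  (HB2 : forall p s, B p s != 0 -> s = p \/ (w p < w s)%N).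

Lemma tri_indep (I : seq T) (c : T -> int) : uniq I ->
  (forall s, \sum_(p <- I) c p * B p s = 0) -> forall p, p \in I -> c p = 0.
Proof.
move=> hu hs.
suff H : forall t p, p \in I -> (w p < t)%N -> c p = 0.
  by move=> p hp; apply: (H (w p).+1).
elim=> [|t IH] p hp hwp //.
have := hs p; rewrite (bigD1_seq p) //= HB1 mulr1 big1_seq ?addr0 //.
move=> q /andP [hqp hq]; case: (eqVneq (B q p) 0) => [->|hB]; first by rewrite mulr0.
case: (HB2 hB) => [hpq|hw]; first by rewrite hpq eqxx in hqp.
rewrite (IH q) ?mul0r //; lia.
Qed.

Variable U : seq T.
Hypothesis HU : forall m s, m \in U -> B m s != 0 -> s \in U.

Definition inspan (f : T -> int) :=
  exists c : T -> int, forall s, f s = \sum_(p <- undup U) c p * B p s.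

Lemma tri_step t : (forall f, (forall s, f s != 0 -> (s \in U) && (t.+1 <= w s)%N) -> inspan f) ->
  forall f, (forall s, f s != 0 -> (s \in U) && (t <= w s)%N) -> inspan f.
Proof.
move=> IH f hf.
pose g s := f s - \sum_(m <- undup U | w m == t) f m * B m s.
have hg : forall s, g s != 0 -> (s \in U) && (t.+1 <= w s)%N.
  move=> s; rewrite /g.
  case: (boolP (s \in U)) => hsU; last first.
    have -> : f s = 0 by apply/eqP; apply/negP => /negP /hf; rewrite (negbTE hsU).
    rewrite big_seq_cond big1 ?subrr ?eqxx // => m /andP [hm _].
    case: (eqVneq (B m s) 0) => [->|hB]; first by rewrite mulr0.
    by move: hsU; rewrite (HU (s:=s) (m:=m)) ?(mem_undup U m) -?(mem_undup U m).
  rewrite /=; case: (ltnP t (w s)) => hts //.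
  rewrite subr_eq0 => /negP []; apply/eqP.
  case: (eqVneq (w s) t) => hwt.
    rewrite big_mkcond (bigD1_seq s) ?mem_undup ?undup_uniq //= hwt eqxx HB1 mulr1 big1 ?addr0 //.
    move=> m hms; case: ifP => // /eqP hmt; case: (eqVneq (B m s) 0) => [->|hB]; first by rewrite mulr0.
    case: (HB2 hB) => [hsm|hw]; first by rewrite hsm eqxx in hms.
    lia.
  have -> : f s = 0.
    apply/eqP; apply/negP => /negP /hf /andP [_]; lia.
  rewrite big1 // => m /eqP hmt; case: (eqVneq (B m s) 0) => [->|hB]; first by rewrite mulr0.
  case: (HB2 hB) => [hsm|hw]; first by move: hwt; rewrite hsm hmt eqxx.
  lia.
case: (IH g hg) => c hc.
exists (fun p => c p + (if w p == t then f p else 0)) => s.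
rewrite -[f s](subrK (\sum_(m <- undup U | w m == t) f m * B m s)) -/(g s) hc.
rewrite [X in _ + X]big_mkcond -big_split /=; apply: eq_bigr => m _.
by case: ifP => _; rewrite mulrDl ?mul0r ?addr0.
Qed.

Lemma tri_span f : (forall s, f s != 0 -> s \in U) -> inspan f.
Proof.
move=> hf.
pose K := \max_(u <- U) w u.
have hK : forall u, u \in U -> (w u <= K)%N.
  by move=> u hu; rewrite /K (big_rem u hu) /= leq_maxl.
suff H : forall i f, (forall s, f s != 0 -> (s \in U) && (K.+1 - i <= w s)%N) -> inspan f.
  apply: (H K.+1) => s /hf ->; by rewrite subnn.
elim=> [|i IH] g hg.
  exists (fun _ => 0) => s; rewrite big1 => [|q _]; last by rewrite mul0r.
  apply/eqP; apply/negP => /negP /hg /andP [/hK h1 h2]; move: h2; rewrite subn0; lia.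
case: (ltnP i K.+1) => hi.
  apply: (tri_step (t := K.+1 - i.+1)) => //.
  by move=> f0 hf0; apply: IH => s /hf0; rewrite subnSK.
apply: IH => s /hg; by rewrite (_ : K.+1 - i.+1 = K.+1 - i)%N; [|lia].
Qed.

End Tri.

Lemma count0_rF n (r : n.-tuple bool) : count id r = 0 -> r = nseq_tuple n false.
Proof.
move=> h0; apply: val_inj => /=.
have : ~~ has id r by rewrite has_count h0.
move/hasPn => H; have hs : size r = n by rewrite size_tuple.
apply: (@eq_from_nth _ false); first by rewrite size_nseq.
move=> i hi; rewrite nth_nseq if_same; have := H _ (mem_nth false hi); by case: (nth false r i).
Qed.

Lemma count_rF n : count id (nseq_tuple n false) = 0.
Proof. by rewrite /= count_nseq mul0n. Qed.

Lemma self_glide_iff n (a : n.-tuple nat) r :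
  (iskomp a r && glide a a r) = (r == nseq_tuple n false).
Proof.
apply/idP/eqP => [/andP [hk hg]|->]; last by rewrite iskomp_rF glide_self.
case: (glide_facts hk hg) => h1 _ _; apply: count0_rF; lia.
Qed.

Lemma Gcoef_self n (a : n.-tuple nat) : Gcoef a a 0 = 1.
Proof.
rewrite /Gcoef -(card1 (nseq_tuple n false)); apply: eq_card => r; rewrite !inE.
rewrite andbA self_glide_iff; apply/andP/eqP => [[/eqP ->//]|->]; by rewrite eqxx count_rF.
Qed.

Lemma Gm1coef_self n (a : n.-tuple nat) : Gm1coef a a = 1%R.
Proof.
rewrite /Gm1coef (eq_bigl (fun r => r == nseq_tuple n false)); last by move=> r; rewrite self_glide_iff.
by rewrite big_pred1_eq count_rF expr0.
Qed.

Lemma Gcoef_nz n (a e : n.-tuple nat) k : Gcoef a e k != 0 ->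
  exists r, [/\ iskomp e r, glide a e r & count id r = k].
Proof.
rewrite -lt0n => /card_gt0P [r]; rewrite inE => /and3P [h1 h2 /eqP h3]; by exists r.
Qed.

Lemma Gm1coef_nz n (a e : n.-tuple nat) : Gm1coef a e != 0%R ->
  exists r, iskomp e r && glide a e r.
Proof.
rewrite /Gm1coef; case: (pickP (fun r => iskomp e r && glide a e r)) => [r hr|H]; first by exists r.
by rewrite big_pred0 ?eqxx.
Qed.

Definition boxT n K : seq (n.-tuple nat) :=
  [seq map_tuple (@nat_of_ord K.+1) t | t <- enum {: n.-tuple 'I_K.+1}].

Lemma mem_boxT n K (e : n.-tuple nat) : all (fun x => x <= K) e -> e \in boxT n K.
Proof.
move=> /allP he; apply/mapP; exists (map_tuple (@inord K) e); first by rewrite mem_enum.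
apply: val_inj => /=; rewrite -map_comp -{1}(map_id e); apply/eq_in_map => x hx /=.
by rewrite inordK // ltnS he.
Qed.

Lemma count_le_n n (r : n.-tuple bool) : count id r <= n.
Proof. by rewrite -{2}(size_tuple r) count_size. Qed.

Lemma countnz_le n (e : n.-tuple nat) : count (fun x => x != 0) e <= n.
Proof. by rewrite -{2}(size_tuple e) count_size. Qed.

Lemma entries_le (e : seq nat) K : sumn e <= K -> all (fun x => x <= K) e.
Proof. move=> h; apply/allP => x hx; exact: leq_trans (leq_sumn_mem hx) h. Qed.

Lemma entries_lt (e : seq nat) K : sumn e <= K -> all (fun x => x < K.+1) e.
Proof. move=> h; apply/allP => x hx; rewrite ltnS; exact: leq_trans (leq_sumn_mem hx) h. Qed.

Lemma Posz_nz (m : nat) : (Posz m != 0)%R -> m != 0.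
Proof. by []. Qed.

Section P1.
Variable n : nat.
Definition T1 := (nat * n.-tuple nat)%type.
Definition B1 (p m : T1) : int := bG p m.2 m.1.
Definition w1 (m : T1) := wt n m.2.
Definition pot1 (m : T1) := (sumn m.2 + m.1 - 2 * count (fun x => x != 0) m.2)%N.

Lemma B1_nz p m : (B1 p m != 0)%R -> exists r,
  [/\ p.1 <= m.1, iskomp m.2 r, glide p.2 m.2 r & count id r = m.1 - p.1].
Proof.
rewrite /B1 /bG; case: ifP => hk; last by rewrite eqxx.
move/Posz_nz/Gcoef_nz => [r [h1 h2 h3]]; by exists r.
Qed.

Lemma B1_self p : B1 p p = 1%R.
Proof. by rewrite /B1 /bG leqnn subnn Gcoef_self. Qed.

Lemma B1_tri p m : (B1 p m != 0)%R -> m = p \/ w1 p < w1 m.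
Proof.
move/B1_nz => [r [hk hr hg hc]].
case: (glide_facts hr hg) => hs hd hz.
case: (eqVneq m.2 p.2) => he.
  left; move: hs hc hk he hr hg hd hz; case: m p => d e [k a] /= hs hc hk he.
  rewrite he in hs *; move=> *; congr pair; lia.
by right; apply: wt_strict => //; rewrite eq_sym.
Qed.

Lemma B1_pot p m : (B1 p m != 0)%R -> pot1 m <= pot1 p.
Proof.
move/B1_nz => [r [hk hr hg hc]].
case: (glide_facts hr hg) => hs hd hz.
rewrite /pot1 (count_nz_flat p.2); lia.
Qed.

Lemma pot1_box M (m : T1) : pot1 m <= M ->
  m \in [seq (d, e) | d <- iota 0 (M + 2 * n).+1, e <- boxT n (M + 2 * n)].
Proof.
case: m => d e hp; rewrite /pot1 /= in hp; have hc : count (fun x : nat => x != 0) e <= n by exact: countnz_le.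
apply/allpairsP; exists (d, e); split => //; first by rewrite mem_iota /=; lia.
apply: mem_boxT; apply: entries_le; rewrite /=; lia.
Qed.

End P1.

Section P1b.
Variable n : nat.

Lemma part1_fin (p : nat * n.-tuple nat) : finsupp2 (bG p).
Proof.
exists (p.1 + sumn p.2 + n).+1 => e d hB.
have := @B1_nz n p (d, e) hB => [[r [hk hr hg hc]]] /=.
case: (glide_facts hr hg) => hs _ _; have hcn := count_le_n r.
rewrite /= in hk hc.
apply/andP; split; first lia.
apply: entries_lt; rewrite /= in hs; lia.
Qed.

Lemma part1_span (f : n.-tuple nat -> nat -> int) : finsupp2 f ->
  exists (I : seq (nat * n.-tuple nat)) (c : nat * n.-tuple nat -> int),
    forall e d, f e d = (\sum_(p <- I) c p * bG p e d)%R.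
Proof.
case=> N hN.
pose M := (n * N + N)%N.
pose U := [seq m <- [seq (d, e) | d <- iota 0 (M + 2 * n).+1, e <- boxT n (M + 2 * n)] | pot1 m <= M].
have HU : forall m s, m \in U -> (B1 m s != 0)%R -> s \in U.
  move=> m s; rewrite mem_filter => /andP [hm _] hB.
  have hs := B1_pot hB.
  rewrite mem_filter pot1_box ?andbT; lia.
have hf : forall s, (f s.2 s.1 != 0)%R -> s \in U.
  case=> d e /= /hN /andP [hd he].
  have hse := sumn_bound he; rewrite size_tuple in hse.
  have hp : pot1 (d, e) <= M by rewrite /pot1 /=; lia.
  by rewrite mem_filter hp pot1_box.
have [c hc] := tri_span (@B1_self n) (@B1_tri n) HU hf.
by exists (undup U), c => e d; rewrite (hc (d, e)).
Qed.

Lemma part1_indep (I : seq (nat * n.-tuple nat)) (c : nat * n.-tuple nat -> int) :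
  uniq I -> (forall e d, (\sum_(p <- I) c p * bG p e d)%R = 0%R) ->
  forall p, p \in I -> c p = 0%R.
Proof.
move=> hu hs; apply: (@tri_indep _ (@B1 n) (@w1 n) (@B1_self n) (@B1_tri n) I c hu).
by case=> d e; exact: hs.
Qed.
End P1b.

Section P2.
Variable n : nat.
Definition pot2 (e : n.-tuple nat) := (sumn e - count (fun x => x != 0) e)%N.

Lemma B2_tri (a e : n.-tuple nat) : (Gm1coef a e != 0)%R -> e = a \/ wt n a < wt n e.
Proof.
move/Gm1coef_nz => [r /andP [hr hg]].
case: (glide_facts hr hg) => hs hd hz.
case: (eqVneq e a) => he; first by left.
by right; apply: wt_strict => //; rewrite eq_sym.
Qed.

Lemma B2_pot (a e : n.-tuple nat) : (Gm1coef a e != 0)%R -> pot2 e <= pot2 a.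
Proof.
move/Gm1coef_nz => [r /andP [hr hg]].
case: (glide_facts hr hg) => hs hd hz.
rewrite /pot2 (count_nz_flat a); lia.
Qed.

Lemma pot2_box M (e : n.-tuple nat) : pot2 e <= M -> e \in boxT n (M + n).
Proof.
move=> hp; have hc := countnz_le e.
apply: mem_boxT; apply: entries_le; rewrite /pot2 in hp; lia.
Qed.

Lemma part2_fin (a : n.-tuple nat) : finsupp1 (Gm1coef a).
Proof.
exists (sumn a + n).+1 => e /Gm1coef_nz [r /andP [hr hg]].
case: (glide_facts hr hg) => hs _ _; have hcn := count_le_n r.
apply: entries_lt; lia.
Qed.

Lemma part2_span (g : n.-tuple nat -> int) : finsupp1 g ->
  exists (I : seq (n.-tuple nat)) (c : n.-tuple nat -> int),
    forall e, g e = (\sum_(a <- I) c a * Gm1coef a e)%R.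
Proof.
case=> N hN.
pose M := (n * N)%N.
pose U := [seq e <- boxT n (M + n) | pot2 e <= M].
have HU : forall m s, m \in U -> (Gm1coef m s != 0)%R -> s \in U.
  move=> m s; rewrite mem_filter => /andP [hm _] hB.
  have hs := B2_pot hB.
  rewrite mem_filter pot2_box ?andbT; lia.
have hf : forall s, (g s != 0)%R -> s \in U.
  move=> e /hN he.
  have hse := sumn_bound he; rewrite size_tuple in hse.
  have hp : pot2 e <= M by rewrite /pot2 /=; lia.
  by rewrite mem_filter hp pot2_box.
have [c hc] := tri_span (@Gm1coef_self n) (@B2_tri) HU hf.
by exists (undup U), c.
Qed.

Lemma part2_indep (I : seq (n.-tuple nat)) (c : n.-tuple nat -> int) :
  uniq I -> (forall e, (\sum_(a <- I) c a * Gm1coef a e)%R = 0%R) ->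
  forall a, a \in I -> c a = 0%R.
Proof.
move=> hu hs; exact: (@tri_indep _ (@Gm1coef n) (wt n) (@Gm1coef_self n) (@B2_tri) I c hu hs).
Qed.
End P2.

Unset Implicit Arguments.
Local Open Scope ring_scope.

Theorem mainTheorem1 (n : nat) (hn : (0 < n)%N) :
  (* Part 1: {beta^k G_a} is a Z-basis of Z[x_1..x_n][beta] *)
  ((forall p : nat * n.-tuple nat, finsupp2 (bG p)) /\
   (forall f : n.-tuple nat -> nat -> int, finsupp2 f ->
      exists (I : seq (nat * n.-tuple nat)) (c : nat * n.-tuple nat -> int),
        forall e d, f e d = \sum_(p <- I) c p * bG p e d) /\
   (forall (I : seq (nat * n.-tuple nat)) (c : nat * n.-tuple nat -> int),
      uniq I -> (forall e d, \sum_(p <- I) c p * bG p e d = 0) ->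
      forall p, p \in I -> c p = 0)) /\
  (* Part 2: {G^(-1)_a} is a Z-basis of Z[x_1..x_n] *)
  ((forall a : n.-tuple nat, finsupp1 (Gm1coef a)) /\
   (forall g : n.-tuple nat -> int, finsupp1 g ->
      exists (I : seq (n.-tuple nat)) (c : n.-tuple nat -> int),
        forall e, g e = \sum_(a <- I) c a * Gm1coef a e) /\
   (forall (I : seq (n.-tuple nat)) (c : n.-tuple nat -> int),
      uniq I -> (forall e, \sum_(a <- I) c a * Gm1coef a e = 0) ->
      forall a, a \in I -> c a = 0)).
Proof.
split.
  split; first exact: part1_fin.
  split; first exact: part1_span.
  exact: part1_indep.
split; first exact: part2_fin.
split; first exact: part2_span.
exact: part2_indep.
Qed.
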